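(* Let $G$ be a BDH graph with color classes $X$ and $Y$. Then each of the 2-sections of the hypergraphs $\mathcal{N}_X(G)$, $\mathcal{N}_X(G)^\uparrow$, $\mathcal{N}_Y(G)$ and $\mathcal{N}_Y(G)^\uparrow$ is a Ptolemaic graph.
   Context: $\mathcal{N}_X(G)=(N(y)\mid y\in Y)$ is the family of neighborhoods of vertices of $Y$, a hypergraph on $X$; $\mathcal{N}_Y(G)=(N(x)\mid x\in X)$ is defined symmetrically on $Y$. For a hypergraph $\mathcal{H}$, $\mathcal{H}^\uparrow$ is obtained by identifying equal members and keeping only inclusion-wise maximal members. The 2-section of a hypergraph $\mathcal{H}$ on $V$ is the graph on $V$ in which $u\neq v$ are adjacent iff some member of $\mathcal{H}$ contains both. A Ptolemaic graph is a graph that is both chordal (no induced chordless cycle of length $\ge4$) and distance hereditary. A graph is distance hereditary if distances in every connected induced subgraph equal distances in the graph; BDH means bipartite distance hereditary. *)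

(* Defs.v *)
From mathcomp Require Import all_boot.
Set Implicit Arguments. Unset Strict Implicit. Unset Printing Implicit Defensive.

Section Graphs.
Variable T : finType.

(* A graph is given by a vertex set V : {set T} and an adjacency relation r : rel T
   (only its restriction to V matters). *)

Definition walk_in (S : {set T}) (r : rel T) (u v : T) (p : seq T) : bool :=
  [&& path r u p, all (fun w => w \in S) (u :: p) & last u p == v].

Definition is_dist (S : {set T}) (r : rel T) (u v : T) (d : nat) : Prop :=
  (exists p, walk_in S r u v p /\ size p = d) /\
  (forall p, walk_in S r u v p -> d <= size p).

Definition connected_in (S : {set T}) (r : rel T) : Prop :=
  forall u v, u \in S -> v \in S -> exists p, walk_in S r u v p.

Definition distance_hereditary (V : {set T}) (r : rel T) : Prop :=
  forall S : {set T}, S \subset V -> connected_in S r ->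
  forall u v, u \in S -> v \in S ->
  forall d, is_dist S r u v d <-> is_dist V r u v d.

Definition chordless_cycle (V : {set T}) (r : rel T) (c : seq T) : bool :=
  [&& uniq c, all (fun w => w \in V) c, cycle r c &
      all (fun x => all (fun y => r x y ==> ((y == next c x) || (x == next c y))) c) c].

Definition chordal (V : {set T}) (r : rel T) : Prop :=
  forall c : seq T, 4 <= size c -> ~~ chordless_cycle V r c.

Definition ptolemaic (V : {set T}) (r : rel T) : Prop :=
  chordal V r /\ distance_hereditary V r.

Definition two_section (H : {set {set T}}) : rel T :=
  fun u v => (u != v) && [exists A in H, (u \in A) && (v \in A)].

(* H^up : identify equal members (automatic for a set) and keep inclusion-wise maximal ones *)
Definition hyp_up (H : {set {set T}}) : {set {set T}} :=
  [set A in H | [forall B in H, ~~ (A \proper B)]].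

Definition nbhd (e : rel T) (x : T) : {set T} := [set z | e x z].

(* N_X(G) = (N(y) | y in Y), a hypergraph on X *)
Definition nbhd_hyp (e : rel T) (Y : {set T}) : {set {set T}} :=
  [set nbhd e y | y in Y].

Definition simple_graph (e : rel T) : Prop := symmetric e /\ irreflexive e.

Definition bipartition (e : rel T) (X : {set T}) : Prop :=
  forall u v, e u v -> (u \in X) != (v \in X).

End Graphs.

(* Main.v *)
Require Import Defs.
From mathcomp Require Import all_boot zify.
From Stdlib Require Import Classical.
Set Implicit Arguments. Unset Strict Implicit. Unset Printing Implicit Defensive.

Section Gen.
Variable T : finType.

Lemma walk_cat (S : {set T}) (r : rel T) u v w p q :
  walk_in S r u v p -> walk_in S r v w q -> walk_in S r u w (p ++ q).
Proof.
rewrite /walk_in => /and3P[hp ap /eqP lp] /and3P[hq aq /eqP lq].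
apply/and3P; split.
- by rewrite cat_path hp lp.
- by rewrite -cat_cons all_cat ap; move: aq => /= /andP[_ ->].
- by rewrite last_cat lp lq.
Qed.

Lemma walk_rev (S : {set T}) (r : rel T) u v p : symmetric r ->
  walk_in S r u v p -> walk_in S r v u (rev (belast u p)).
Proof.
move=> sr /and3P[hp ap /eqP lp]; apply/and3P; split.
- rewrite -lp rev_path; rewrite -(@eq_path _ r) // => a b; exact: sr.
- move: ap; rewrite lastI all_rcons lp /= all_rev => /andP[-> ->]; done.
- case: p hp ap lp => [|y s] /= _ _; [by move=> ->|by rewrite rev_cons last_rcons].
Qed.

Lemma size_walk_rev (u : T) p : size (rev (belast u p)) = size p.
Proof. by rewrite size_rev size_belast. Qed.

Lemma walk_sub (S S' : {set T}) r u v p : S \subset S' -> walk_in S r u v p -> walk_in S' r u v p.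
Proof.
move=> sS /and3P[hp ap lp]; apply/and3P; split => //.
apply: sub_all ap => z; exact: (subsetP sS).
Qed.

Lemma dist_exists (S : {set T}) r u v : (exists p, walk_in S r u v p) -> exists d, is_dist S r u v d.
Proof.
move=> [p hp].
suff: forall n, (exists p, walk_in S r u v p /\ size p <= n) -> exists d, is_dist S r u v d.
  by apply; exists p; split.
elim=> [|n IH] [q [hq sq]].
- exists 0; split; last by [].
  exists q; split => //; by move: sq; rewrite leqn0 => /eqP.
- case: (classic (exists p, walk_in S r u v p /\ size p <= n)) => [h|h]; first exact: IH.
  exists (size q); split; first by exists q.
  move=> p' hp'; apply: leq_trans sq _; rewrite ltnNge; apply/negP => hle; apply: h; by exists p'.
Qed.

Lemma dist_uniq (S : {set T}) r u v d1 d2 : is_dist S r u v d1 -> is_dist S r u v d2 -> d1 = d2.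
Proof.
move=> [[p1 [w1 s1]] m1] [[p2 [w2 s2]] m2]; apply/eqP; rewrite eqn_leq; apply/andP; split.
- by rewrite -s2; exact: m1.
- by rewrite -s1; exact: m2.
Qed.

Lemma two_section_nb (Z W : {set T}) (e : rel T) u v : symmetric e -> bipartition e Z -> W = ~: Z ->
  u \in Z -> v \in Z ->
  two_section (nbhd_hyp e W) u v = (u != v) && [exists y, e u y && e y v].
Proof.
move=> es bp -> uZ vZ; rewrite /two_section; congr (_ && _).
apply/existsP/existsP => [[A /andP[/imsetP[y yW ->] /andP[uA vA]]] | [y /andP[uy yv]]].
- exists y; rewrite !inE in uA vA; by rewrite es uA vA.
- exists (nbhd e y); rewrite !inE es uy yv !andbT; apply/imsetP; exists y => //.
  rewrite in_setC; move: (bp u y uy); rewrite uZ; by case: (y \in Z).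
Qed.

Lemma two_section_up (H : {set {set T}}) : two_section (hyp_up H) =2 two_section H.
Proof.
move=> u v; rewrite /two_section; congr (_ && _).
apply/existsP/existsP => [[A /andP[hA uvA]] | [A /andP[hA uvA]]].
- exists A; move: hA; rewrite inE => /andP[-> _]; done.
- have [B /maxsetP[hB mB] AB] := @maxset_exists T (fun B => B \in H) A hA.
  exists B; rewrite inE hB /=; apply/andP; split.
  + apply/forallP => B'; apply/implyP => hB'; apply/negP => /properP[sBB' [z zB' zB]].
    move: (mB B' hB' sBB') => eq; move: zB'; rewrite eq => zB'; by rewrite zB' in zB.
  + move: uvA => /andP[uA vA]; by rewrite (subsetP AB _ uA) (subsetP AB _ vA).
Qed.
End Gen.

Section Main.
Variables (T : finType) (e : rel T) (X : {set T}) (r : rel T).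
Hypothesis esym : symmetric e.
Hypothesis bip : bipartition e X.
Hypothesis dh : distance_hereditary [set: T] e.
Hypothesis hr : forall u v, u \in X -> v \in X ->
  r u v = (u != v) && [exists y, e u y && e y v].

Lemma bipX u y : u \in X -> e u y -> y \notin X.
Proof. move=> uX /bip; rewrite uX; by case: (y \in X). Qed.

Lemma bipY y x : y \notin X -> e y x -> x \in X.
Proof. move=> /negPf yX /bip; rewrite yX; by case: (x \in X). Qed.

Lemma lift_a (S S' : {set T}) u v p :
  S \subset X -> (forall x y, x \in S -> e x y -> y \in S') -> S \subset S' ->
  walk_in S r u v p -> exists q, walk_in S' e u v q /\ size q = (size p).*2.
Proof.
move=> sX h3 h4; elim: p u => [|x p IH] u /and3P[hp ap /eqP lp].
- move: ap lp => /= /andP[uS _] <-; exists [::]; split => //.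
  by rewrite /walk_in /= (subsetP h4 _ uS) eqxx.
- move: hp ap lp => /= /andP[rux hp] /and3P[uS xS ap] lp.
  move: rux; rewrite hr ?(subsetP sX) // => /andP[_ /existsP[y /andP[uy yx]]].
  have wx : walk_in S r x v p by rewrite /walk_in hp /= xS ap lp eqxx.
  have [q [hq sq]] := IH x wx.
  exists [:: y, x & q]; split; last by rewrite /= sq doubleS.
  move: hq => /and3P[hq /= /andP[xS' aq] lq].
  by rewrite /walk_in /= uy yx hq (subsetP h4 _ uS) (h3 _ _ uS uy) aq lq xS'.
Qed.

Lemma lift_b (S S' : {set T}) u v q :
  S \subset X -> (forall x, x \in X -> x \in S' -> x \in S) ->
  u \in S -> v \in X -> walk_in S' e u v q ->
  exists p, walk_in S r u v p /\ (size p).*2 <= size q.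
Proof.
move=> sX h2; have [n] := ubnP (size q); elim: n q u => // n IH q u sqn uS vX.
case: q sqn => [|y [|x q']] sqn /and3P[hp ap /eqP lp].
- exists [::]; split => //; move: lp => /= <-; by rewrite /walk_in /= uS eqxx.
- move: hp lp => /= /andP[uy _] yv; move: (bipX (subsetP sX _ uS) uy); by rewrite yv vX.
- move: hp ap lp => /= /and3P[uy yx hp] /and4P[_ _ xS' ap] lp.
  have yX := bipX (subsetP sX _ uS) uy.
  have xX := bipY yX yx.
  have xS := h2 _ xX xS'.
  have wq : walk_in S' e x v q' by rewrite /walk_in hp /= xS' ap lp eqxx.
  have sq' : size q' < n by move: sqn; rewrite /= ltnS => /ltnW.
  have [p [wp sp]] := IH q' x sq' xS vX wq.
  case: (eqVneq x u) => [xu|xu].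
  + exists p; split; first by rewrite -xu.
    apply: leq_trans sp _; by apply/leqW/leqW.
  + exists (x :: p); split; last by rewrite /= doubleS !ltnS.
    move: wp => /and3P[wp ap' lp']; rewrite /walk_in /= wp lp' uS andbT /=.
    move: ap' => /= /andP[-> ->]; rewrite andbT.
    rewrite hr ?(subsetP sX) // eq_sym xu /= andbT; apply/existsP; exists y; by rewrite uy yx.
Qed.

Lemma dist_lift (S S' : {set T}) u v d :
  S \subset X -> (forall x, x \in X -> x \in S' -> x \in S) ->
  (forall x y, x \in S -> e x y -> y \in S') -> S \subset S' ->
  u \in S -> v \in S -> is_dist S r u v d -> is_dist S' e u v d.*2.
Proof.
move=> sX h2 h3 h4 uS vS [[p [hp sp]] hm]; split.
- have [q [hq sq]] := lift_a sX h3 h4 hp; exists q; split => //; by rewrite sq sp.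
- move=> q hq; have [p' [hp' sp']] := lift_b sX h2 uS (subsetP sX _ vS) hq.
  apply: leq_trans sp'; rewrite leq_double; exact: hm.
Qed.

Lemma dh_r : distance_hereditary X r.
Proof.
move=> S sX cS u v uS vS d.
have [p0 hp0] := cS u v uS vS.
have [d0 hd0] := dist_exists (ex_intro _ p0 hp0).
have hp1 : walk_in X r u v p0 := walk_sub sX hp0.
have [d1 hd1] := dist_exists (ex_intro _ p0 hp1).
pose S' := S :|: [set y | [exists x in S, e x y]].
have h2 : forall x, x \in X -> x \in S' -> x \in S.
  move=> x xX; rewrite in_setU in_set => /orP[//|/existsP[z /andP[zS ezx]]].
  by move: (bipX (subsetP sX _ zS) ezx); rewrite xX.
have h3 : forall x y, x \in S -> e x y -> y \in S'.
  move=> x y xS exy; rewrite in_setU in_set; apply/orP; right; apply/existsP; exists x; by rewrite xS.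
have h4 : S \subset S' by apply/subsetP => x xS; rewrite in_setU xS.
have e0 := dist_lift sX h2 h3 h4 uS vS hd0.
have e1 := @dist_lift X [set: T] u v d1 (subxx X) (fun x xX _ => xX)
  (fun x y _ _ => in_setT y) (subsetT X) (subsetP sX _ uS) (subsetP sX _ vS) hd1.
have cS' : connected_in S' e.
  have toS : forall a, a \in S' -> exists s, s \in S /\ exists q, walk_in S' e s a q.
    move=> a; rewrite in_setU in_set => /orP[aS|/existsP[s /andP[sS esa]]].
    - exists a; split=>//; exists [::]; by rewrite /walk_in /= eqxx (subsetP h4 _ aS).
    - exists s; split=>//; exists [:: a].
      by rewrite /walk_in /= esa eqxx (subsetP h4 _ sS) (h3 _ _ sS esa).
  move=> a b aS' bS'.
  have [sa [saS [qa hqa]]] := toS a aS'.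
  have [sb [sbS [qb hqb]]] := toS b bS'.
  have [pab hpab] := cS sa sb saS sbS.
  have [q [hq _]] := lift_a sX h3 h4 hpab.
  exists (rev (belast sa qa) ++ q ++ qb).
  exact: walk_cat (walk_rev esym hqa) (walk_cat hq hqb).
have e0' := (dh (subsetT S') cS' (subsetP h4 _ uS) (subsetP h4 _ vS) d0.*2).1 e0.
have d01 : d0 = d1 by apply: double_inj; exact: dist_uniq e0' e1.
split => hd.
- by rewrite (dist_uniq hd hd0) d01.
- by rewrite (dist_uniq hd hd1) -d01.
Qed.

Lemma next_idx (c : seq T) x0 i : uniq c -> i < size c ->
  next c (nth x0 c i) = nth x0 c (if i.+1 < size c then i.+1 else 0).
Proof.
move=> uc ic; rewrite next_nth mem_nth // index_uniq //.
case: c uc ic => [//|y p] /= uc ic.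
case: ifP => h /=; first by apply: set_nth_default.
by rewrite nth_default // leqNgt -ltnS h.
Qed.

Lemma chordal_r : chordal X r.
Proof.
move=> c c4; apply/negP => /and4P[uc ac cc ch].
have x0 : T by case: c c4 {uc ac cc ch} => [|y ?].
pose n := size c.
pose x i := nth x0 c i.
have xX : forall i, i < n -> x i \in X by move=> i hi; apply: (allP ac); exact: mem_nth.
have xinj : forall i j, i < n -> j < n -> x i = x j -> i = j.
  by move=> i j hi hj /eqP; rewrite /x nth_uniq // => /eqP.
have succn : forall i, i < n -> (if i.+1 < n then i.+1 else 0) < n.
  move=> i hi; case: ifP => // _; lia.
have adj : forall i, i < n -> r (x i) (x (if i.+1 < n then i.+1 else 0)).
  move=> i hi; rewrite /x -next_idx //; apply: (next_cycle cc); exact: mem_nth.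
have chord : forall i j w, i < n -> j < n -> i != j -> e (x i) w -> e w (x j) ->
    (j = i.+1 \/ (i = n.-1 /\ j = 0)) \/ (i = j.+1 \/ (j = n.-1 /\ i = 0)).
  move=> i j w hi hj ij iw wj.
  have rij : r (x i) (x j).
    rewrite hr ?xX //; apply/andP; split.
    - by apply/eqP => /xinj -/(_ hi hj) eij; rewrite eij eqxx in ij.
    - by apply/existsP; exists w; rewrite iw wj.
  have := allP (allP ch _ (mem_nth x0 hi)) _ (mem_nth x0 hj).
  rewrite rij /= -/(x i) -/(x j) /x !next_idx // -/(x j) -/(x i).
  case/orP => /eqP /xinj H.
  - left; move: (succn i hi) H; case: ifP => h hs /(_ hj hs) ->; [left|right] => //; split=>//; lia.
  - right; move: (succn j hj) H; case: ifP => h hs /(_ hi hs) ->; [left|right] => //; split=>//; lia.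
pose succ i := if i.+1 < n then i.+1 else 0.
pose conn i := odflt x0 [pick y | e (x i) y && e y (x (succ i))].
have connP : forall i, i < n -> e (x i) (conn i) /\ e (conn i) (x (succ i)).
  move=> i hi; rewrite /conn; case: pickP => [y /andP[]//|none]; exfalso.
  move: (adj i hi); rewrite hr ?xX ?succn // => /andP[_ /existsP[y hy]].
  by move: (none y); rewrite hy.
have n4 : 4 <= n := c4.
pose S := [set z | (z \in c) || [exists i : 'I_n, (i < n.-1) && (z == conn i)]].
have xS : forall i, i < n -> x i \in S by move=> i hi; rewrite inE mem_nth.
have cS : forall i, i < n.-1 -> conn i \in S.
  move=> i hi; rewrite inE; apply/orP; right; apply/existsP.
  have hi' : i < n by lia.
  by exists (Ordinal hi'); rewrite /= hi eqxx.
have succi : forall i, i < n.-1 -> succ i = i.+1.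
  move=> i hi; rewrite /succ; case: ifP => // /negbT; rewrite -leqNgt => h; lia.
have step : forall i, i < n.-1 -> walk_in S e (x i) (x i.+1) [:: conn i; x i.+1].
  move=> i hi; have hi1 : i < n by lia.
  have hi2 : i.+1 < n by lia.
  have [h1 h2] := connP i hi1; rewrite succi // in h2.
  by rewrite /walk_in /= h1 h2 (xS _ hi1) (cS _ hi) (xS _ hi2) eqxx.
have toa : forall k i, i + k = n.-1 -> exists p, walk_in S e (x i) (x n.-1) p.
  elim=> [|k IH] i hik.
  - exists [::]; rewrite addn0 in hik; rewrite hik /walk_in /= xS ?eqxx //; lia.
  - have hi : i < n.-1 by lia.
    have [p hp] := IH i.+1 (ltac:(lia)).
    exists ([:: conn i; x i.+1] ++ p); exact: walk_cat (step i hi) hp.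
have toaS : forall z, z \in S -> exists p, walk_in S e z (x n.-1) p.
  move=> z; rewrite inE => /orP[zc | /existsP[i /andP[hi /eqP ->]]].
  - have hz : index z c < n by rewrite index_mem.
    have [p hp] := toa (n.-1 - index z c) (index z c) (ltac:(lia)).
    by exists p; move: hp; rewrite /x nth_index.
  - have [p hp] := toa (n.-1 - i.+1) i.+1 (ltac:(lia)).
    have hi1 : i < n by lia.
    have hi2 : i.+1 < n by lia.
    have [h1 h2] := connP i hi1; rewrite succi // in h2.
    have w1 : walk_in S e (conn i) (x i.+1) [:: x i.+1].
      by rewrite /walk_in /= h2 (cS _ hi) (xS _ hi2) eqxx.
    exists ([:: x i.+1] ++ p); exact: walk_cat w1 hp.
have connS : connected_in S e.
  move=> a b aS bS; have [pa ha] := toaS a aS; have [pb hb] := toaS b bS.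
  exists (pa ++ rev (belast b pb)); exact: walk_cat ha (walk_rev esym hb).
have hn1 : n.-1 < n by lia.
have hn0 : 0 < n by lia.
have [ea eb] := connP n.-1 hn1.
have sn : succ n.-1 = 0 by rewrite /succ; case: ifP => //; lia.
rewrite sn in eb.
have wT : walk_in [set: T] e (x n.-1) (x 0) [:: conn n.-1; x 0].
  by rewrite /walk_in /= ea eb !in_setT eqxx.
have [d hd] := dist_exists (ex_intro (fun p => walk_in [set: T] e (x n.-1) (x 0) p) _ wT).
have d2 : d <= 2 by apply: hd.2 wT.
have [[p [hp sp]] _] := (dh (subsetT S) connS (xS _ hn1) (xS _ hn0) d).2 hd.
case: p hp sp => [|w [|w' [|? ?]]] hp sp.
- move: hp => /and3P[_ _ /eqP /= /xinj h]; move: (h hn1 hn0); lia.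
- move: hp => /and3P[/= /andP[aw _] _ /eqP /= wb]; rewrite wb in aw.
  by move: (bipX (xX _ hn1) aw); rewrite xX.
- move: hp => /and3P[/= /and3P[aw ww' _] /and4P[_ wS _ _] /eqP /= wb].
  rewrite wb in ww'.
  move: wS; rewrite inE => /orP[wc | /existsP[i /andP[hi /eqP wi]]].
  + by move: (bipX (xX _ hn1) aw); rewrite (allP ac _ wc).
  + have hi1 : i < n by lia.
    have hi2 : i.+1 < n by lia.
    have h1 : 1 < n by lia.
    have n1 : 1 != n.-1 by apply/eqP; lia.
    have [c1 c2] := connP i hi1; rewrite succi // -wi in c2; rewrite -wi in c1.
    have H1 := chord 0 i.+1 w hn0 hi2 isT (ltac:(by rewrite esym)) c2.
    have ni : n.-1 != i by rewrite neq_ltn hi orbT.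
    have H2 := chord n.-1 i w hn1 hi1 ni aw (ltac:(by rewrite esym)).
    case: (eqVneq (i : nat) 0) => [i0|in0].
    * rewrite i0 in c2.
      have H3 := chord 1 n.-1 w h1 hn1 n1 (ltac:(by rewrite esym)) (ltac:(by rewrite esym)).
      move: H1 H2 H3 i0 n4; move: (nat_of_ord i) => k; clear; lia.
    * have H3 := chord 0 i w hn0 hi1 (ltac:(by rewrite eq_sym)) (ltac:(by rewrite esym)) (ltac:(by rewrite esym)).
      move: H1 H2 H3 in0 hi n4; move: (nat_of_ord i) => k; clear; lia.
- by move: sp d2 => /= <-.
Qed.

End Main.

Theorem proposition2 (T : finType) (e : rel T) (X Y : {set T}) :
  simple_graph e ->
  Y = ~: X ->
  bipartition e X ->
  distance_hereditary [set: T] e ->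
  [/\ ptolemaic X (two_section (nbhd_hyp e Y)),
      ptolemaic X (two_section (hyp_up (nbhd_hyp e Y))),
      ptolemaic Y (two_section (nbhd_hyp e X)) &
      ptolemaic Y (two_section (hyp_up (nbhd_hyp e X)))].
Proof.
move=> [esym _] hY bip dh.
have bipY : bipartition e Y.
  move=> u v /bip; rewrite hY !in_setC; by case: (u \in X); case: (v \in X).
have hX : X = ~: Y by rewrite hY setCK.
have hr1 : forall u v, u \in X -> v \in X ->
    two_section (nbhd_hyp e Y) u v = (u != v) && [exists y, e u y && e y v].
  move=> u v; exact: two_section_nb esym bip hY.
have hr2 : forall u v, u \in X -> v \in X ->
    two_section (hyp_up (nbhd_hyp e Y)) u v = (u != v) && [exists y, e u y && e y v].
  move=> u v uX vX; rewrite two_section_up; exact: hr1.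
have hr3 : forall u v, u \in Y -> v \in Y ->
    two_section (nbhd_hyp e X) u v = (u != v) && [exists y, e u y && e y v].
  move=> u v; exact: two_section_nb esym bipY hX.
have hr4 : forall u v, u \in Y -> v \in Y ->
    two_section (hyp_up (nbhd_hyp e X)) u v = (u != v) && [exists y, e u y && e y v].
  move=> u v uX vX; rewrite two_section_up; exact: hr3.
split; split.
- exact: chordal_r esym bip dh hr1.
- exact: dh_r esym bip dh hr1.
- exact: chordal_r esym bip dh hr2.
- exact: dh_r esym bip dh hr2.
- exact: chordal_r esym bipY dh hr3.
- exact: dh_r esym bipY dh hr3.
- exact: chordal_r esym bipY dh hr4.
- exact: dh_r esym bipY dh hr4.
Qed.
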